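(* Let $p,q$ be positive integers with $2\le p/q<4$, and let $f,g$ be $(p,q)$-colourings of a connected graph $G$. If $f$ reconfigures to $g$, then there is a reconfiguration sequence from $f$ to $g$ of length $O(|V(G)|^2)$.
   Context: A $(p,q)$-colouring of $G$ is a map $f:V(G)\to\{0,\dots,p-1\}$ with $q\le|f(u)-f(v)|\le p-q$ for every edge $uv$. A reconfiguration sequence from $f$ to $g$ is a sequence $f=f_0,\dots,f_n=g$ of $(p,q)$-colourings in which consecutive colourings differ on at most one vertex; $f$ reconfigures to $g$ if one exists. The implicit constant may depend on $p,q$. *)

(* Defs.v *)
From mathcomp Require Import all_boot.
Set Implicit Arguments. Unset Strict Implicit. Unset Printing Implicit Defensive.

Definition natdist (a b : nat) : nat := (a - b) + (b - a).

Definition pq_colouring (p q : nat) (T : finType) (e : rel T) (f : T -> nat) : Prop :=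
  (forall v, f v < p) /\
  (forall u v, e u v -> q <= natdist (f u) (f v) <= p - q).

Definition differ_at_most_one (T : finType) (f g : T -> nat) : Prop :=
  exists v, forall u, u != v -> f u = g u.

Definition recon_seq (p q : nat) (T : finType) (e : rel T)
    (f g : T -> nat) (n : nat) (fs : nat -> T -> nat) : Prop :=
  fs 0 = f /\ fs n = g /\
  (forall i, i <= n -> pq_colouring p q e (fs i)) /\
  (forall i, i < n -> differ_at_most_one (fs i) (fs i.+1)).

Definition reconfigures (p q : nat) (T : finType) (e : rel T) (f g : T -> nat) : Prop :=
  exists n fs, recon_seq p q e f g n fs.

Definition connected_graph (T : finType) (e : rel T) : Prop :=
  forall x y, connect e x y.

(* Main.v *)
From Stdlib Require Import ZArith Lia Classical FunctionalExtensionality.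
Require Import Defs.
From mathcomp Require Import all_boot zify.
Set Implicit Arguments. Unset Strict Implicit. Unset Printing Implicit Defensive.

Definition differ1 (T : finType) (a b : T -> Z) : Prop :=
  exists v, forall u, u != v -> a u = b u.

Definition lpath (T : finType) (P : (T -> Z) -> Prop) (X Y : T -> Z) (n : nat)
  (hs : nat -> T -> Z) : Prop :=
  hs 0 = X /\ hs n = Y /\ (forall i, i <= n -> P (hs i)) /\
  (forall i, i < n -> differ1 (hs i) (hs i.+1)).

Lemma differ1_sym (T : finType) (a b : T -> Z) : differ1 a b -> differ1 b a.
Proof. by move=> [v hv]; exists v => u /hv ->. Qed.

Lemma lpath_rev (T : finType) P (X Y : T -> Z) n hs :
  lpath P X Y n hs -> lpath P Y X n (fun i => hs (n - i)).
Proof.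
move=> [h0 [hn [hP hd]]]; split; first by rewrite subn0.
split; first by rewrite subnn.
split; first by move=> i hi; apply: hP; rewrite leq_subr.
move=> i hi; apply: differ1_sym.
have -> : n - i = (n - i.+1).+1 by lia.
apply: hd; lia.
Qed.

Lemma lpath_cat (T : finType) P (X Y Z0 : T -> Z) n m hs ks :
  lpath P X Y n hs -> lpath P Y Z0 m ks ->
  lpath P X Z0 (n + m) (fun i => if i <= n then hs i else ks (i - n)).
Proof.
move=> [h0 [hn [hP hd]]] [k0 [km [kP kd]]]; split; first by [].
split.
  case: m km {kP kd} => [|m] km; first by rewrite addn0 leqnn; rewrite -km k0.
  have -> : (n + m.+1 <= n) = false by lia.
  by rewrite addKn.
split.
  move=> i hi; case: ifP => hin; first by apply: hP.
  by apply: kP; lia.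
move=> i hi; case: (ltnP i n) => hin.
  have -> : i <= n by lia.
  by apply: hd.
case: (eqVneq i n) => [->|hne].
  rewrite subSn // subnn hn -k0 if_same.
  by apply: kd; lia.
have -> : (i <= n) = false by lia.
rewrite subSn; last by lia.
apply: kd; lia.
Qed.

Lemma lpath_map (T : finType) P P' (X Y : T -> Z) n hs (phi : T -> Z -> Z) :
  lpath P X Y n hs -> (forall i, i <= n -> P' (fun u => phi u (hs i u))) ->
  lpath P' (fun u => phi u (X u)) (fun u => phi u (Y u)) n (fun i u => phi u (hs i u)).
Proof.
move=> [h0 [hn [hP hd]]] hP'; split; first by rewrite h0.
split; first by rewrite hn.
split; first by [].
move=> i /hd [v hv]; exists v => u /hv ->; done.
Qed.

Definition PC (T : finType) (P : (T -> Z) -> Prop) :=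
  (forall X Y, P X -> P Y -> P (fun u => Z.min (X u) (Y u))) /\
  (forall X Y, P X -> P Y -> P (fun u => Z.max (X u) (Y u))).

Fixpoint lcum (T : finType) (hs : nat -> T -> Z) (t : nat) : T -> Z :=
  match t with
  | 0 => hs 0
  | t'.+1 => fun u => Z.min (lcum hs t' u) (hs t'.+1 u)
  end.

Lemma lcum_le (T : finType) (hs : nat -> T -> Z) t u : (lcum hs t u <= hs t u)%Z.
Proof. case: t => [|t] /=; lia. Qed.

Lemma lcum_le0 (T : finType) (hs : nat -> T -> Z) t u : (lcum hs t u <= hs 0%N u)%Z.
Proof. elim: t => [|t IH] /=; lia. Qed.

Lemma lcum_dec (T : finType) (hs : nat -> T -> Z) t u : (lcum hs t.+1 u <= lcum hs t u)%Z.
Proof. simpl; lia. Qed.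

Lemma down_path (T : finType) P (X Y : T -> Z) n hs :
  PC P -> lpath P X Y n hs ->
  exists hs', lpath P X (fun u => Z.min (X u) (Y u)) n hs' /\
    (forall i, i < n -> forall u, (hs' i.+1 u <= hs' i u)%Z).
Proof.
move=> [cmin cmax] [h0 [hn [hP hd]]].
have PM : P (fun u => Z.min (X u) (Y u)).
  by apply: cmin; [rewrite -h0; apply: hP | rewrite -hn; apply: hP].
have Pl : forall t, t <= n -> P (lcum hs t).
  elim=> [|t IH] ht /=; first by apply: hP.
  apply: cmin; [apply: IH; lia | apply: hP; lia].
exists (fun t u => Z.max (Z.min (X u) (Y u)) (lcum hs t u)); split; last first.
  move=> i _ u; have := @lcum_dec T hs i u; lia.
split.
  apply: functional_extensionality => u /=; rewrite h0; lia.
split.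
  apply: functional_extensionality => u.
  have := @lcum_le T hs n u; have := @lcum_le0 T hs n u; rewrite h0 hn; lia.
split; first by move=> i hi; apply: cmax => //; apply: Pl.
move=> i /hd [v hv]; exists v => u /hv huv /=.
have := @lcum_le T hs i u; rewrite huv; lia.
Qed.

Lemma sum_strict (T : finType) (a b c : T -> Z) :
  (forall u, (c u <= b u <= a u)%Z) -> b <> c ->
  \sum_u Z.to_nat (a u - b u) < \sum_u Z.to_nat (a u - c u).
Proof.
move=> hle hne.
have [u0 hu0] : exists u0, b u0 <> c u0.
  apply: NNPP => hn; apply: hne; apply: functional_extensionality => u.
  by apply: NNPP => h; apply: hn; exists u.
rewrite (bigD1 u0) //= [X in _ < X](bigD1 u0) //=.
have : \sum_(i | i != u0) Z.to_nat (a i - b i) <= \sum_(i | i != u0) Z.to_nat (a i - c i).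
  apply: leq_sum => i _; have := hle i; lia.
have := hle u0; lia.
Qed.

Lemma compress (T : finType) P (X Y : T -> Z) n hs :
  (forall i, i < n -> forall u, (hs i.+1 u <= hs i u)%Z) -> lpath P X Y n hs ->
  exists k hs', lpath P X Y k hs' /\ k <= \sum_u Z.to_nat (X u - Y u).
Proof.
move=> hmon [h0 [hn [hP hd]]].
have hX : forall m, m <= n -> forall u, (hs m u <= X u)%Z.
  elim=> [|m IH] hm u; first by rewrite h0; lia.
  have := hmon m hm u; have := IH (ltnW hm) u; lia.
suff : forall m, m <= n -> exists k hs', lpath P X (hs m) k hs' /\
         k <= \sum_u Z.to_nat (X u - hs m u).
  by move=> /(_ n (leqnn n)); rewrite hn.
elim=> [|m IH] hm.
  exists 0, (fun _ => X); split; last by [].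
  split; first by []. split; first by []. split; last by [].
  by move=> i _; rewrite -h0; apply: hP.
have [k [hs' [hp hk]]] := IH (ltnW hm).
case: (classic (hs m.+1 = hs m)) => heq.
  by exists k, hs'; rewrite heq.
have hp1 : lpath P (hs m) (hs m.+1) 1 (fun i => if i == 0 then hs m else hs m.+1).
  split; first by []. split; first by [].
  split; first by case=> [|i] hi /=; apply: hP; lia.
  by case=> [|i] hi //=; apply: hd.
exists (k + 1); eexists; split; first by apply: (lpath_cat hp hp1).
have := @sum_strict T X (hs m) (hs m.+1).
have : forall u, (hs m.+1 u <= hs m u <= X u)%Z.
  by move=> u; have := hmon m hm u; have := hX m (ltnW hm) u; lia.
move=> h1 /(_ h1 (fun E => heq (esym E))) h; rewrite addn1; exact: (leq_ltn_trans hk h).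
Qed.

Lemma short_path (T : finType) P (X Y : T -> Z) n hs :
  PC P -> lpath P X Y n hs ->
  exists k hs', lpath P X Y k hs' /\
    k <= \sum_u Z.to_nat (X u - Z.min (X u) (Y u)) +
         \sum_u Z.to_nat (Y u - Z.min (X u) (Y u)).
Proof.
move=> hPC hp.
have [h1 [p1 m1]] := down_path hPC hp.
have [k1 [g1 [q1 b1]]] := compress m1 p1.
have [h2 [p2 m2]] := down_path hPC (lpath_rev hp).
have [k2 [g2 [q2 b2]]] := compress m2 p2.
have eqm : (fun u => Z.min (Y u) (X u)) = (fun u => Z.min (X u) (Y u)).
  by apply: functional_extensionality => u; lia.
rewrite eqm in q2.
exists (k1 + k2); eexists; split; first by apply: (lpath_cat q1 (lpath_rev q2)).
apply: leq_add; [exact: b1 | apply: (leq_trans b2); apply: leq_sum => u _; by rewrite Z.min_comm].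
Qed.

Lemma core (x y z j p q : Z) : (0 < q -> 2*q <= p -> p < 4*q -> q <= x <= p - q ->
  -p <= 2*(y - x) <= p -> y = z + p*j -> q <= Z.abs z <= p - q -> q <= y <= p - q)%Z.
Proof.
move=> hq hp1 hp2 hx hyx hy hz.
destruct (Z_le_gt_dec j (-1)) as [h|h].
  have : (p * j <= -p)%Z by nia. lia.
destruct (Z_le_gt_dec j 0) as [h'|h'].
  have hj : j = 0%Z by lia. subst j. lia.
destruct (Z_le_gt_dec j 1) as [h''|h''].
  have hj : j = 1%Z by lia. subst j. lia.
have : (p * j >= 2 * p)%Z by nia. lia.
Qed.

Lemma mod_lemma (x y p q : Z) : (0 < q -> 2*q <= p -> q <= x - y <= p - q ->
  q <= Z.abs (x mod p - y mod p) <= p - q)%Z.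
Proof.
move=> hq hp hxy.
have hp0 : (p <> 0)%Z by lia.
have ex := Z.div_mod x p hp0; have ey := Z.div_mod y p hp0.
have bx := Z.mod_pos_bound x p ltac:(lia); have by' := Z.mod_pos_bound y p ltac:(lia).
set a := (x mod p)%Z in ex bx *; set b := (y mod p)%Z in ey by' *.
set m := (x / p - y / p)%Z.
have hm : (x - y = p * m + (a - b))%Z by rewrite /m; lia.
destruct (Z_le_gt_dec m (-1)) as [h|h].
  have : (p * m <= -p)%Z by nia. lia.
destruct (Z_le_gt_dec m 0) as [h'|h'].
  have hm0 : m = 0%Z by lia. rewrite hm0 in hm. lia.
destruct (Z_le_gt_dec m 1) as [h''|h''].
  have hm1 : m = 1%Z by lia. rewrite hm1 in hm. lia.
have : (p * m >= 2 * p)%Z by nia. lia.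
Qed.

Definition Pf (p q : nat) (T : finType) (e : rel T) (f : T -> nat) (X : T -> Z) : Prop :=
  forall u v, e u v ->
    (f v < f u -> (Z.of_nat q <= X u - X v <= Z.of_nat p - Z.of_nat q)%Z) /\
    (f u < f v -> (Z.of_nat q - Z.of_nat p <= X u - X v <= - Z.of_nat q)%Z).

Lemma Pf_PC p q (T : finType) (e : rel T) f : PC (Pf p q e f).
Proof.
split=> X Y hX hY u v huv; have := hX u v huv; have := hY u v huv; lia.
Qed.

Lemma Pf_shift p q (T : finType) (e : rel T) f X c :
  Pf p q e f X -> Pf p q e f (fun u => X u + c)%Z.
Proof. move=> hX u v huv; have := hX u v huv; lia. Qed.

Lemma natdistZ a b : Z.of_nat (natdist a b) = Z.abs (Z.of_nat a - Z.of_nat b).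
Proof. rewrite /natdist; lia. Qed.

Lemma col_edge (p q : nat) (T : finType) (e : rel T) f u v :
  0 < q -> pq_colouring p q e f -> e u v -> f v < f u \/ f u < f v.
Proof.
move=> hq [_ hc] /hc /andP[h1 _]; move: h1; rewrite /natdist; lia.
Qed.

Lemma Pf_f p q (T : finType) (e : rel T) f :
  pq_colouring p q e f -> Pf p q e f (fun u => Z.of_nat (f u)).
Proof.
move=> [_ hc] u v /hc /andP[h1 h2]; move: h1 h2; rewrite /natdist; lia.
Qed.

Definition delta (p a b : nat) : Z :=
  let d := (Z.of_nat b - Z.of_nat a)%Z in
  if (Z.of_nat p <? 2*d)%Z then (d - Z.of_nat p)%Z
  else if (2*d <? - Z.of_nat p)%Z then (d + Z.of_nat p)%Z else d.

Lemma delta_spec p a b : a < p -> b < p ->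
  (exists j, delta p a b = Z.of_nat b - Z.of_nat a + Z.of_nat p * j)%Z /\
  (- Z.of_nat p <= 2 * delta p a b <= Z.of_nat p)%Z.
Proof.
move=> ha hb; rewrite /delta.
case: Z.ltb_spec => h1.
  split; [exists (-1)%Z; lia | lia].
case: Z.ltb_spec => h2.
  split; [exists 1%Z; lia | lia].
split; [exists 0%Z; lia | lia].
Qed.

Lemma delta0 p a : delta p a a = 0%Z.
Proof. rewrite /delta Z.sub_diag; destruct (Z.ltb_spec (Z.of_nat p) (2*0)); destruct (Z.ltb_spec (2*0) (- Z.of_nat p)); lia. Qed.

Fixpoint lift (p : nat) (T : finType) (fs : nat -> T -> nat) (t : nat) : T -> Z :=
  match t with
  | 0 => fun u => Z.of_nat (fs 0 u)
  | t'.+1 => fun u => (lift p fs t' u + delta p (fs t' u) (fs t'.+1 u))%Z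
  end.

Lemma lift_inv (p q : nat) (T : finType) (e : rel T) N fs :
  0 < q -> 2 * q <= p -> p < 4 * q ->
  (forall i, i <= N -> pq_colouring p q e (fs i)) ->
  (forall i, i < N -> differ_at_most_one (fs i) (fs i.+1)) ->
  forall t, t <= N ->
    (forall u, exists j, lift p fs t u = Z.of_nat (fs t u) + Z.of_nat p * j)%Z /\
    Pf p q e (fs 0) (lift p fs t).
Proof.
move=> hq hp1 hp2 hcol hdiff.
elim=> [|t IH] ht.
  split; first by move=> u; exists 0%Z; simpl; lia.
  exact: (Pf_f (hcol 0 (leq0n N))).
have [IHr IHP] := IH (ltnW ht).
have [v hv] := hdiff t ht.
have [c0 c0e] := hcol t (ltnW ht).
have [c1 c1e] := hcol t.+1 ht.
have dspec : forall u, (exists j, delta p (fs t u) (fs t.+1 u) =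
    Z.of_nat (fs t.+1 u) - Z.of_nat (fs t u) + Z.of_nat p * j)%Z /\
  (- Z.of_nat p <= 2 * delta p (fs t u) (fs t.+1 u) <= Z.of_nat p)%Z.
  by move=> u; apply: delta_spec.
have dzero : forall u, u != v -> delta p (fs t u) (fs t.+1 u) = 0%Z.
  by move=> u /hv ->; apply: delta0.
have res : forall u, (exists j, lift p fs t.+1 u = Z.of_nat (fs t.+1 u) + Z.of_nat p * j)%Z.
  move=> u; have [j hj] := IHr u; have [[j' hj'] _] := dspec u.
  exists (j + j')%Z; rewrite /= hj hj'; lia.
split; first by [].
move=> a b hab.
have [ja hja] := res a; have [jb hjb] := res b.
have hz := c1e a b hab; move: hz => /andP[hz1 hz2].
have hz : (Z.of_nat q <= Z.abs (Z.of_nat (fs t.+1 a) - Z.of_nat (fs t.+1 b))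
   <= Z.of_nat p - Z.of_nat q)%Z.
  move: hz1 hz2; rewrite /natdist; lia.
have hyx : (- Z.of_nat p <= 2 * ((lift p fs t.+1 a - lift p fs t.+1 b) -
     (lift p fs t a - lift p fs t b)) <= Z.of_nat p)%Z.
  have la : forall u, lift p fs t.+1 u = (lift p fs t u + delta p (fs t u) (fs t.+1 u))%Z by [].
  rewrite !la.
  have [_ da] := dspec a; have [_ db] := dspec b.
  case: (eqVneq a v) => [ea|na]; last by rewrite (dzero a na); lia.
  case: (eqVneq b v) => [eb|nb]; last by rewrite (dzero b nb); lia.
  subst a b; lia.
have hy : (lift p fs t.+1 a - lift p fs t.+1 b =
   (Z.of_nat (fs t.+1 a) - Z.of_nat (fs t.+1 b)) + Z.of_nat p * (ja - jb))%Z.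
  rewrite hja hjb; lia.
have [o1 o2] := IHP a b hab.
split=> hlt.
  have := core (x := (lift p fs t a - lift p fs t b)%Z) (y := (lift p fs t.+1 a - lift p fs t.+1 b)%Z)
   (z := (Z.of_nat (fs t.+1 a) - Z.of_nat (fs t.+1 b))%Z) (j := (ja - jb)%Z)
   (p := Z.of_nat p) (q := Z.of_nat q).
  have := o1 hlt; lia.
have := core (x := (- (lift p fs t a - lift p fs t b))%Z) (y := (- (lift p fs t.+1 a - lift p fs t.+1 b))%Z)
   (z := (- (Z.of_nat (fs t.+1 a) - Z.of_nat (fs t.+1 b)))%Z) (j := (- (ja - jb))%Z)
   (p := Z.of_nat p) (q := Z.of_nat q).
have := o2 hlt; lia.
Qed.

Definition col (p : nat) (T : finType) (X : T -> Z) : T -> nat :=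
  fun u => Z.to_nat (X u mod Z.of_nat p).

Lemma col_colouring (p q : nat) (T : finType) (e : rel T) f X :
  0 < q -> 2 * q <= p -> pq_colouring p q e f -> Pf p q e f X ->
  pq_colouring p q e (col p X).
Proof.
move=> hq hp hf hX; split.
  move=> v; rewrite /col.
  have := Z.mod_pos_bound (X v) (Z.of_nat p) ltac:(lia); lia.
move=> u v huv; rewrite /natdist /col.
have [o1 o2] := hX u v huv.
case: (col_edge hq hf huv) => hlt.
  have := mod_lemma (x := X u) (y := X v) (p := Z.of_nat p) (q := Z.of_nat q).
  have := Z.mod_pos_bound (X u) (Z.of_nat p) ltac:(lia).
  have := Z.mod_pos_bound (X v) (Z.of_nat p) ltac:(lia).
  have := o1 hlt; lia.
have := mod_lemma (x := X v) (y := X u) (p := Z.of_nat p) (q := Z.of_nat q).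
have := Z.mod_pos_bound (X u) (Z.of_nat p) ltac:(lia).
have := Z.mod_pos_bound (X v) (Z.of_nat p) ltac:(lia).
have := o2 hlt; lia.
Qed.

Lemma col_res (p : nat) (T : finType) (X : T -> Z) u n :
  (exists j, X u = Z.of_nat n + Z.of_nat p * j)%Z -> n < p -> col p X u = n.
Proof.
move=> [j hj] hn; rewrite /col hj.
rewrite (Z.mul_comm (Z.of_nat p) j) Z_mod_plus_full Z.mod_small; lia.
Qed.

Lemma spread_edge (p q : nat) (T : finType) (e : rel T) f X Y u v :
  0 < q -> pq_colouring p q e f -> Pf p q e f X -> Pf p q e f Y -> e u v ->
  (Z.abs ((Y u - X u) - (Y v - X v)) <= Z.of_nat p)%Z.
Proof.
move=> hq hf hX hY huv.
have [o1 o2] := hX u v huv; have [o3 o4] := hY u v huv.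
case: (col_edge hq hf huv) => hlt.
  have := o1 hlt; have := o3 hlt; lia.
have := o2 hlt; have := o4 hlt; lia.
Qed.

Lemma spread (p q : nat) (T : finType) (e : rel T) f X Y :
  0 < q -> pq_colouring p q e f -> Pf p q e f X -> Pf p q e f Y -> connected_graph e ->
  forall x y, (Z.abs ((Y x - X x) - (Y y - X y)) <= Z.of_nat p * Z.of_nat #|T|)%Z.
Proof.
move=> hq hf hX hY hc x y.
have hpath : forall s x, path e x s ->
    (Z.abs ((Y x - X x) - (Y (last x s) - X (last x s))) <= Z.of_nat p * Z.of_nat (size s))%Z.
  elim=> [|a s IH] x0 /=; first by move=> _; lia.
  move=> /andP[h1 h2].
  have := IH a h2; have := spread_edge hq hf hX hY h1; lia.
have := hc x y => /connectP [s hs ->].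
case/shortenP: hs => s' hs' hu _.
have hsz : size s' < #|T|.
  have := card_uniqP hu; rewrite /= => hcard.
  have := max_card (mem (x :: s')); rewrite hcard /=; lia.
have hm : (Z.of_nat p * Z.of_nat (size s') <= Z.of_nat p * Z.of_nat #|T|)%Z.
  by apply: Z.mul_le_mono_nonneg_l; lia.
have := hpath s' x hs'.
move=> h; exact: (Z.le_trans _ _ _ h hm).
Qed.

Lemma choose_W (T : finType) P (X Y : T -> Z) N hs (p S : Z) (v0 : T) :
  (0 < p)%Z -> (0 <= S)%Z -> PC P -> (forall X c, P X -> P (fun u => X u + c)%Z) ->
  lpath P X Y N hs ->
  (forall u, Z.abs ((Y u - X u) - (Y v0 - X v0)) <= S)%Z ->
  exists c G, lpath P X (fun u => Y u - p * c)%Z N G /\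
    (forall u, Z.abs (Y u - p * c - X u) <= 2 * S + p)%Z.
Proof.
move=> hp hS [cmin cmax] hsh hpath hsp.
have [h0 [hn [hP hd]]] := hpath.
have PY : P Y by rewrite -hn; apply: hP.
set x := (Y v0 - X v0)%Z.
have hp0 : (p <> 0)%Z by lia.
destruct (Z_le_gt_dec 0 ((x - S) / p)) as [hc|hc].
  set c := ((x - S) / p)%Z.
  have ec := Z.div_mod (x - S) p hp0; have bc := Z.mod_pos_bound (x - S) p hp.
  fold c in ec.
  have pc0 : (0 <= p * c)%Z by nia.
  have hW : forall u, (0 <= Y u - p * c - X u <= 2 * S + p)%Z.
    move=> u; have := hsp u; rewrite -/x; lia.
  have PW : P (fun u => Y u - p * c)%Z by apply: (hsh Y (- (p * c))%Z).
  exists c, (fun i u => Z.min (hs i u) (Y u - p * c))%Z; split; last first.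
    move=> u; have := hW u; lia.
  have := lpath_map (P' := P) (phi := fun u z => Z.min z (Y u - p * c))%Z hpath.
  have e1 : (fun u => Z.min (X u) (Y u - p * c))%Z = X.
    by apply: functional_extensionality => u; have := hW u; lia.
  have e2 : (fun u => Z.min (Y u) (Y u - p * c))%Z = (fun u => Y u - p * c)%Z.
    by apply: functional_extensionality => u; lia.
  rewrite e1 e2; apply=> i hi; apply: cmin => //; exact: hP.
destruct (Z_le_gt_dec 0 ((- (x + S)) / p)) as [hd'|hd'].
  set d := ((- (x + S)) / p)%Z.
  have ed := Z.div_mod (- (x + S)) p hp0; have bd := Z.mod_pos_bound (- (x + S)) p hp.
  fold d in ed.
  have pd0 : (0 <= p * d)%Z by nia.
  have hW : forall u, (- (2 * S + p) <= Y u + p * d - X u <= 0)%Z.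
    move=> u; have := hsp u; rewrite -/x; lia.
  have PW : P (fun u => Y u + p * d)%Z by apply: (hsh Y (p * d)%Z).
  exists (- d)%Z, (fun i u => Z.max (hs i u) (Y u + p * d))%Z; split; last first.
    move=> u; have := hW u; lia.
  have := lpath_map (P' := P) (phi := fun u z => Z.max z (Y u + p * d))%Z hpath.
  have e1 : (fun u => Z.max (X u) (Y u + p * d))%Z = X.
    by apply: functional_extensionality => u; have := hW u; lia.
  have e2 : (fun u => Z.max (Y u) (Y u + p * d))%Z = (fun u => Y u - p * - d)%Z.
    by apply: functional_extensionality => u; lia.
  rewrite e1 e2; apply=> i hi; apply: cmax => //; exact: hP.
have h1 : (x - S < 0)%Z.
  destruct (Z_lt_le_dec (x - S) 0) as [h|h]; [exact h | have := Z.div_pos (x - S) p h hp; lia].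
have h2 : (- (x + S) < 0)%Z.
  destruct (Z_lt_le_dec (- (x + S)) 0) as [h|h]; [exact h | have := Z.div_pos (- (x + S)) p h hp; lia].
exists 0%Z, hs; split.
  have e2 : (fun u => Y u - p * 0)%Z = Y.
    by apply: functional_extensionality => u; lia.
  by rewrite e2.
move=> u; have := hsp u; rewrite -/x; lia.
Qed.

Lemma sum_bound (T : finType) (X W : T -> Z) (B : Z) :
  (forall u, Z.abs (W u - X u) <= B)%Z ->
  \sum_u Z.to_nat (X u - Z.min (X u) (W u)) <= #|T| * Z.to_nat B /\
  \sum_u Z.to_nat (W u - Z.min (X u) (W u)) <= #|T| * Z.to_nat B.
Proof.
move=> hb.
have hc : \sum_(u : T) Z.to_nat B = #|T| * Z.to_nat B by rewrite sum_nat_const.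
split; rewrite -hc; apply: leq_sum => u _; have := hb u; lia.
Qed.

Unset Implicit Arguments.
Theorem corollary2p11 (p q : nat) (hq : 0 < q) (hp1 : 2 * q <= p) (hp2 : p < 4 * q) :
  exists C : nat,
    forall (T : finType) (e : rel T),
      symmetric e -> irreflexive e -> connected_graph e ->
      forall f g : T -> nat,
        pq_colouring p q e f -> pq_colouring p q e g ->
        reconfigures p q e f g ->
        exists (n : nat) (fs : nat -> T -> nat),
          recon_seq p q e f g n fs /\ n <= C * #|T| ^ 2.
Proof.
exists (6 * p).
move=> T e esym eirr conn f g hf hg [N [fs [hf0 [hgN [hcol hdiff]]]]].
case: (pickP (@predT T)) => [v0 _ | hnone]; last first.
  have fg : f = g by apply: functional_extensionality => u; have := hnone u.
  exists 0, (fun _ => f); split; last by [].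
  split; first by []. split; first by []. split; last by [].
  by move=> i _.
have hn1 : 0 < #|T| by apply/card_gt0P; exists v0.
have hinv := lift_inv hq hp1 hp2 hcol hdiff.
rewrite hf0 in hinv.
have hl : lpath (Pf p q e f) (lift p fs 0) (lift p fs N) N (lift p fs).
  split; first by []. split; first by [].
  split; first by move=> i hi; have [_ h] := hinv i hi.
  move=> i /hdiff [v hv]; exists v => u /hv hu /=; rewrite hu delta0; lia.
have PX : Pf p q e f (lift p fs 0) by have [_ h] := hinv 0 (leq0n N).
have PY : Pf p q e f (lift p fs N) by have [_ h] := hinv N (leqnn N).
have hsp := spread hq hf PX PY conn.
have [c [G [hG hb]]] := choose_W (p := Z.of_nat p) (S := (Z.of_nat p * Z.of_nat #|T|)%Z) (v0 := v0)
   ltac:(lia) ltac:(lia) (Pf_PC p q e f) (@Pf_shift p q T e f) hl (fun u => hsp u v0).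
have [k [hs' [hk hkb]]] := short_path (Pf_PC p q e f) hG.
have [sb1 sb2] := sum_bound hb.
have [k0 [kk [kP kd]]] := hk.
exists k, (fun i => col p (hs' i)); split.
  split.
    apply: functional_extensionality => u; rewrite k0; apply: col_res.
      by exists 0%Z; rewrite /= hf0; lia.
    by have [h _] := hf; apply: h.
  split.
    apply: functional_extensionality => u; rewrite kk; apply: col_res.
      have [hr _] := hinv N (leqnn N); have [j hj] := hr u.
      by exists (j - c)%Z; rewrite hj hgN; lia.
    by have [h _] := hg; apply: h.
  split.
    by move=> i hi; apply: (col_colouring hq hp1 hf); apply: kP.
  move=> i /kd [v hv]; exists v => u /hv hu; by rewrite /col hu.
have : k <= 2 * (#|T| * Z.to_nat (2 * (Z.of_nat p * Z.of_nat #|T|) + Z.of_nat p)).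
  apply: (leq_trans hkb); rewrite mul2n -addnn; exact: leq_add.
have -> : Z.to_nat (2 * (Z.of_nat p * Z.of_nat #|T|) + Z.of_nat p) = 2 * (p * #|T|) + p by lia.
move=> hk2; apply: (leq_trans hk2).
have : p <= p * #|T| by rewrite leq_pmulr.
nia.
Qed.
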